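(* For $\mu\ge0$ let $s(t,\mu)$ be the solution of $s'(t)+\mu(1+kD^\alpha_{0^+})s(t)=0$ for $t>0$, $s(0)=1$ (equivalently of $s(t)+\mu\int_0^th(t-\tau)s(\tau)d\tau=1$ with $h(t)=1+\frac{kt^{-\alpha}}{\Gamma(1-\alpha)}$). Then there is a constant $C>0$ independent of $t,\mu$ such that $s(t,\mu)\le\frac{C}{1+\mu\langle t\rangle}$ for all $t>0$, $\mu\ge0$.
   Context: $k>0$, $\alpha\in(0,1)$, $D^\alpha_{0^+}f(t)=\frac{1}{\Gamma(1-\alpha)}\frac{d}{dt}\int_0^t(t-s)^{-\alpha}f(s)ds$, $\langle t\rangle=t+kt^{1-\alpha}$. The function $t\mapsto s(t,\mu)$ is completely monotone (in particular nonnegative and nonincreasing). *)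

(* Defs.v *)
From HB Require Import structures.
From mathcomp Require Import all_boot all_order all_algebra.
From mathcomp Require Import all_classical all_reals all_analysis.
Set Implicit Arguments. Unset Strict Implicit. Unset Printing Implicit Defensive.
Import Order.TTheory GRing.Theory Num.Theory.
Import numFieldNormedType.Exports.
Local Open Scope classical_set_scope.
Local Open Scope ring_scope.

Definition Gamma {R : realType} (x : R) : R :=
  fine (\int[@lebesgue_measure R]_(t in `](0%R:R), +oo[%classic) (t `^ (x - 1) * expR (- t))%:E)%E.

Definition hker {R : realType} (k alpha : R) (t : R) : R :=
  1 + k * t `^ (- alpha) / Gamma (1 - alpha).

Definition bracket {R : realType} (k alpha : R) (t : R) : R :=
  t + k * t `^ (1 - alpha).

Definition is_relax_sol {R : realType} (k alpha mu : R) (sigma : R -> R) : Prop :=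
  {within `[(0%R:R), +oo[%classic, continuous sigma} /\
  forall t : R, 0 <= t ->
    (@lebesgue_measure R).-integrable `[(0%R:R), t]%classic
        (fun tau => (hker k alpha (t - tau) * sigma tau)%:E) /\
    ((sigma t)%:E + mu%:E *
       \int[@lebesgue_measure R]_(tau in `[(0%R:R), t]%classic)
           (hker k alpha (t - tau) * sigma tau)%:E = 1%:E)%E.

(* Main.v *)
Require Import Defs.
From HB Require Import structures.
From mathcomp Require Import all_boot all_order all_algebra.
From mathcomp Require Import all_classical all_reals all_analysis.
Import Order.TTheory GRing.Theory Num.Theory.
Local Open Scope classical_set_scope.
Local Open Scope ring_scope.
From mathcomp Require Import measurable_realfun.
From mathcomp Require Import ring lra.

Module Aux.
Import numFieldNormedType.Exports.
Import Num.Def.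
Section G.
Variable R : realType.
Notation mu := (@lebesgue_measure R : measure (measurableTypeR R) R).

Lemma powR_cont (r x : R) : 0 < x -> {for x, continuous (fun y : R => y `^ r)}.
Proof.
move=> x0; apply: differentiable_continuous; apply/derivable1_diffP.
by apply: derivable_powR; rewrite in_itv/= andbT.
Qed.

Lemma int_pow (al a : R) : 0 < al < 1 -> 0 < a < 1 ->
  (\int[mu]_(t in `[a, 1%R]) ((1 - al) * t `^ (- al))%:E = (1 - a `^ (1 - al))%:E)%E.
Proof.
move=> /andP[a0 a1] /andP[b0 b1].
rewrite (@continuous_FTC2 _ _ (fun y : R => y `^ (1 - al))) //; last first.
- move=> x; rewrite in_itv/= => /andP[x0 _].
  rewrite powR_derive1 ?in_itv/= ?andbT ?(lt_trans b0)//.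
  by congr (_ * _); congr (_ `^ _); ring.
- split.
  + move=> x; rewrite in_itv/= => /andP[x0 _].
    by apply: derivable_powR; rewrite in_itv/= andbT (lt_trans b0).
  + by apply: cvg_at_right_filter; apply: powR_cont.
  + by apply: cvg_at_left_filter; apply: powR_cont.
- apply: continuous_in_subspaceT => x; rewrite inE/= in_itv/= => /andP[x0 _].
  apply: (@continuousM _ R^o (fun=> 1 - al) (fun y : R => y `^ (- al))); first exact: cst_continuous.
  by apply: powR_cont; rewrite (lt_le_trans b0).
- by rewrite powR1 EFinB.
Qed.

Lemma int_pow01 (al : R) : 0 < al < 1 ->
  (\int[mu]_(t in `]0%R, 1%R]) ((1 - al) * t `^ (- al))%:E <= 1)%E.
Proof.
move=> /andP[a0 a1].
pose F (n : nat) := `[(n.+2%:R)^-1, 1%R]%classic : set R.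
have FU : \bigcup_n F n = `]0%R, 1%R]%classic.
  rewrite eqEsubset; split.
  - move=> x [n _]; rewrite /F /= !in_itv/= => /andP[h1 ->]; rewrite andbT.
    by apply: lt_le_trans h1; rewrite invr_gt0.
  - move=> x; rewrite /= in_itv/= => /andP[x0 x1].
    exists (truncn x^-1) => //; rewrite /F /= in_itv/= x1 andbT.
    rewrite -[leRHS]invrK lef_pV2 ?posrE ?invr_gt0 //.
    apply: ltW; apply: lt_le_trans (truncnS_gt _) _.
    by rewrite ler_nat.
have nd : nondecreasing_seq F.
  move=> n m nm; apply/subsetPset => x; rewrite /F /= !in_itv/= => /andP[h1 ->].
  rewrite andbT; apply: le_trans h1; rewrite lef_pV2 ?posrE // ler_nat.
  by rewrite !ltnS.
have mF i : measurable (F i) by exact: measurable_itv.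
have mf i : measurable_fun (F i) (fun t : R => (((1 - al) * t `^ (- al))%:E : \bar R)).
  apply: measurable_funTS; apply/measurable_EFinP.
  by apply: measurable_funM => //; exact: measurable_powR.
have f0 i x : F i x -> (0 <= ((1 - al) * x `^ (- al))%:E)%E.
  by move=> _; rewrite lee_fin mulr_ge0 ?powR_ge0 // subr_ge0 ltW.
have h := @ge0_nondecreasing_set_cvg_integral _ (measurableTypeR R) R F (fun t : R => ((1 - al) * t `^ (- al))%:E) mu nd mF mf f0.
rewrite FU in h; rewrite -(cvg_lim _ h) //.
apply: lime_le; first by apply/cvg_ex; eexists; exact: h.
near=> n; rewrite int_pow ?a0 ?a1 //; last first.
  by rewrite invr_gt0 ltr0n /= invf_lt1 // ltr1n.
by rewrite lee_fin gerBl powR_ge0.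
Unshelve. all: end_near.
Qed.

Lemma meas_g (al : R) (D : set (measurableTypeR R)) :
  measurable_fun D (fun t : R => (t `^ (- al) * expR (- t))%:E).
Proof.
apply: measurable_funTS; apply/measurable_EFinP.
apply: measurable_funM; first exact: measurable_powR.
by apply: measurableT_comp; [exact: measurable_expR|exact: measurable_funN].
Qed.

Lemma Gamma_int_pos (al : R) : 0 < al < 1 ->
  ((expR (-1))%:E <= \int[mu]_(t in `]0%R, +oo[) (t `^ (- al) * expR (- t))%:E)%E
  /\ (\int[mu]_(t in `]0%R, +oo[) (t `^ (- al) * expR (- t))%:E < +oo)%E.
Proof.
move=> /andP[a0 a1].
have g0 : forall t : R, (0 <= (t `^ (- al) * expR (- t))%:E)%E.
  by move=> t; rewrite lee_fin mulr_ge0 ?powR_ge0 ?expR_ge0.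
have hsplit : (`]0%R, +oo[%classic : set R) = `]0%R, 1%R]%classic `|` `]1%R, +oo[%classic.
  apply: (@itv_bndbnd_setU _ R (BRight 0%R) (BRight 1%R) +oo%O); by rewrite bnd_simp.
have disj : [disjoint (`]0%R, 1%R]%classic : set R) & `]1%R, +oo[%classic].
  apply/disj_setPS => x [] /=; rewrite !in_itv/= => /andP[_ x1] /andP[x2 _].
  by move: (le_lt_trans x1 x2); rewrite ltxx.
rewrite hsplit ge0_integral_setU //; last exact: meas_g.
split.
- rewrite -[X in (X <= _)%E]adde0; apply: leeD; last by apply: integral_ge0.
  have -> : (expR (-1))%:E = (\int[mu]_(t in `]0%R, 1%R]) (cst (expR (-1))%:E) t)%E.
    rewrite integral_cst //.
    have L : (lebesgue_measure (`]0%R, 1%R]%classic : set R) = 1%E).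
      rewrite lebesgue_measure_itv /=.
      by rewrite lte_fin ltr01 oppr0 adde0.
    by rewrite -[in LHS](mule1 (expR (-1))%:E); congr (_ * _)%E; exact/esym/L.
  apply: ge0_le_integral => //.
  + by move=> t _; rewrite lee_fin expR_ge0.
  + exact: meas_g.
  + move=> t; rewrite /= in_itv/= => /andP[t0 t1]; rewrite lee_fin.
    rewrite -[leLHS]mul1r; apply: ler_pM; rewrite ?expR_ge0 //.
    * rewrite powRN -[leLHS]invr1 lef_pV2 ?posrE ?powR_gt0 //.
      by rewrite -(powRr0 t) ger_powR ?t0 // ltW.
    * by rewrite ler_expR lerN2.
- apply: lte_add_pinfty.
  + apply: (@le_lt_trans _ _ ((1 - al)^-1)%:E); last exact: ltry.
    apply: (@le_trans _ _ (\int[mu]_(t in `]0%R, 1%R]) ((1 - al)^-1 %:E * ((1 - al) * t `^ (- al))%:E))%E).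
      apply: ge0_le_integral => //.
      * exact: meas_g.
      * apply: measurable_funeM; apply/measurable_EFinP.
        apply: measurable_funTS.
        by apply: measurable_funM => //; exact: measurable_powR.
      * move=> t; rewrite /= in_itv/= => /andP[t0 t1].
        rewrite -EFinM lee_fin mulrA mulVf ?subr_eq0 ?(gt_eqF a1) // mul1r.
        rewrite -[leRHS]mulr1 ler_pM ?powR_ge0 ?expR_ge0 //.
        by rewrite expR_le1 oppr_le0 ltW.
    rewrite ge0_integralZl_EFin //; last by rewrite invr_ge0 subr_ge0 ltW.
    * rewrite -[leRHS]mule1; apply: lee_wpmul2l; first by rewrite lee_fin invr_ge0 subr_ge0 ltW.
      by apply: int_pow01; rewrite a0 a1.
    * by move=> t _; rewrite lee_fin mulr_ge0 ?powR_ge0 // subr_ge0 ltW.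
    * apply: measurable_funTS; apply/measurable_EFinP.
      by apply: measurable_funM => //; exact: measurable_powR.
  + apply: (@le_lt_trans _ _ (\int[mu]_x (exponential_pdf 1 x)%:E)%E); last first.
      by rewrite integral_exponential_pdf // ltry.
    apply: (@le_trans _ _ (\int[mu]_(x in `]1%R, +oo[) (exponential_pdf 1 x)%:E)%E).
      apply: ge0_le_integral => //.
      * exact: meas_g.
      * apply: measurable_funTS; apply/measurable_EFinP.
        exact: measurable_exponential_pdf.
      * move=> t; rewrite /= in_itv/= andbT => t1.
        rewrite lee_fin exponential_pdfE; last exact: ltW (lt_trans ltr01 t1).
        rewrite mul1r mulN1r.
        rewrite -[leRHS]mul1r ler_pM ?powR_ge0 ?expR_ge0 //.
        rewrite powRN -[leRHS]invr1 lef_pV2 ?posrE ?powR_gt0 ?(lt_trans ltr01 t1) //.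
        by rewrite -(powRr0 t) ler_powR // ltW.
    apply: ge0_subset_integral => //.
    * apply: measurable_funTS; apply/measurable_EFinP.
      exact: measurable_exponential_pdf.
    * by move=> t _; rewrite lee_fin exponential_pdf_ge0.
Qed.
End G.

Lemma Gamma_pos (R : realType) (al : R) : 0 < al < 1 -> 0 < Gamma (1 - al).
Proof.
move=> hal; rewrite /Gamma.
have -> : 1 - al - 1 = - al by ring.
have [h1 h2] := @Gamma_int_pos R al hal.
apply: fine_gt0; rewrite h2 andbT.
by apply: lt_le_trans h1; rewrite lte_fin expR_gt0.
Qed.
End Aux.

Theorem mainTheorem8 (R : realType) (k alpha : R) (hk : 0 < k)
  (ha0 : 0 < alpha) (ha1 : alpha < 1) (s : R -> R -> R)
  (hs : forall mu : R, 0 <= mu -> is_relax_sol k alpha mu (s ^~ mu))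
  (hs_nonneg : forall mu t : R, 0 <= mu -> 0 <= t -> 0 <= s t mu)
  (hs_noninc : forall mu t1 t2 : R, 0 <= mu -> 0 <= t1 -> t1 <= t2 ->
                 s t2 mu <= s t1 mu) :
  exists C : R, 0 < C /\
    forall t mu : R, 0 < t -> 0 <= mu ->
      s t mu <= C / (1 + mu * bracket k alpha t).
Proof.
have G0 : 0 < Gamma (1 - alpha) by apply: Aux.Gamma_pos; rewrite ha0 ha1.
set G := Gamma (1 - alpha) in G0 *.
exists (1 + G); split; first by rewrite addr_gt0.
move=> t mu t0 mu0.
have [_ /(_ t (ltW t0)) [hint heq]] := hs mu mu0.
set f := (fun tau : R => (hker k alpha (t - tau) * s tau mu)%:E) in hint heq.
set I := (\int[lebesgue_measure]_(tau in `[0%R, t]) f tau)%E in heq.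
have Ifin : I \is a fin_num by apply: integrable_fin_num.
have st0 : 0 <= s t mu by apply: hs_nonneg => //; exact: ltW.
have hker0 : forall x, 0 <= hker k alpha x.
  move=> x; rewrite /hker addr_ge0 // divr_ge0 ?(ltW G0) //.
  by rewrite mulr_ge0 ?powR_ge0 // ltW.
have f0 : forall tau, 0 <= tau -> (0 <= f tau)%E.
  by move=> tau tau0; rewrite /f lee_fin mulr_ge0 // hs_nonneg.
have mf : measurable_fun `[0%R, t] f by case/integrableP: hint.
pose c := s t mu * (1 + k * t `^ (- alpha) / G).
have Ilb : ((c * t)%:E <= I)%E.
  have L : (lebesgue_measure (`[0%R, t[%classic : set R) = t%:E).
    by rewrite lebesgue_measure_itv /= lte_fin t0 oppr0 adde0.
  have -> : (c * t)%:E = (\int[lebesgue_measure]_(tau in `[0%R, t[) (cst (c%:E)) tau)%E.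
    by rewrite integral_cst // EFinM; congr (_ * _)%E; exact/esym/L.
  apply: (@le_trans _ _ (\int[lebesgue_measure]_(tau in `[0%R, t[) f tau)%E).
    apply: ge0_le_integral => //.
    - by move=> x _; rewrite lee_fin mulr_ge0 // addr_ge0 // divr_ge0 ?(ltW G0) // mulr_ge0 ?powR_ge0 // ltW.
    - apply: measurable_funS mf => //.
      by move=> x /=; rewrite !in_itv/= => /andP[-> /ltW ->].
    - move=> x; rewrite /= in_itv/= => /andP[x0 xt].
      rewrite /f lee_fin /c /hker mulrC; apply: ler_pM => //.
      + by rewrite addr_ge0 // divr_ge0 ?(ltW G0) // mulr_ge0 ?powR_ge0 // ltW.
      + rewrite lerD2l ler_pM2r ?invr_gt0 // ler_pM2l //.
        have tx0 : 0 < t - x by rewrite subr_gt0.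
        rewrite !powRN lef_pV2 ?posrE ?powR_gt0 //.
        apply: ge0_ler_powR.
        * exact: ltW.
        * by rewrite nnegrE ltW.
        * by rewrite nnegrE ltW.
        * by rewrite gerBl.
      + by apply: hs_noninc => //; exact: ltW.
  apply: ge0_subset_integral => //.
  - by move=> x; rewrite /= in_itv/= => /andP[x0 _]; apply: f0.
  - by move=> x /=; rewrite !in_itv/= => /andP[-> /ltW ->].
have IlbR : c * t <= fine I by rewrite -lee_fin fineK.
have heqR : s t mu + mu * fine I = 1.
  by move: heq; rewrite -(fineK Ifin) -EFinM -EFinD => -[].
have ct : c * t = s t mu * (t + k * t `^ (1 - alpha) / G).
  rewrite /c powRD; last by apply/implyP => _; rewrite gt_eqF.
  by rewrite powRr1 ?ltW //; field; rewrite gt_eqF.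
rewrite ct in IlbR.
set A := t `^ (1 - alpha) in IlbR *.
have A0 : 0 <= A by exact: powR_ge0.
set S := s t mu in IlbR heqR st0 *.
set b := k * A / G in IlbR.
have b0 : 0 <= b by rewrite /b divr_ge0 ?(ltW G0) // mulr_ge0 // ltW.
have B0 : 0 <= mu * (t + k * A).
  by apply: mulr_ge0 => //; apply: addr_ge0; [exact: ltW | apply: mulr_ge0 => //; exact: ltW].
rewrite /bracket -/A ler_pdivlMr; last by lra.
have H1 : S + mu * (S * (t + b)) <= 1.
  by rewrite -heqR lerD2l ler_wpM2l.
have kAe : k * A = G * b by rewrite /b; field; rewrite gt_eqF.
rewrite kAe.
have P0 : 0 <= S * mu * b by rewrite mulr_ge0 // mulr_ge0.
have Q0 : 0 <= S * mu * t by rewrite mulr_ge0 ?mulr_ge0 // ltW.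
have -> : S * (1 + mu * (t + G * b)) = S + S * mu * t + G * (S * mu * b) by ring.
have H2 : S + S * mu * t + S * mu * b <= 1.
  by move: H1; have -> : S + mu * (S * (t + b)) = S + S * mu * t + S * mu * b by ring.
have P1 : S * mu * b <= 1 by lra.
have hGP : G * (S * mu * b) <= G * 1 by rewrite ler_wpM2l // ltW.
lra.
Qed.
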